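(* Let $I\subset\mathbb{R}$ be an open interval, $W\subset I$ a countable dense subset, $\mathrm{gr}\colon W\to\mathbb{N}$ a grading with finite fibers, $K>1$, and give the fractured interval $\check I$ the division metric $d$ with steepness $K$. Suppose there are constants $M,\alpha>0$ with $\mathrm{gap}(r)\ge M r^\alpha$ for all $r>0$. Let $X$ be a metric space and $f\colon\check I\to X$ a function with $f = \tilde f\circ\pi|_{\check I}$ for some $\tilde f\colon I\to X$ (equivalently, $f(w^L)=f(w^R)$ for all $w\in W$). If $f$ is Hölder with exponent $\nu>0$ and constant $C$ (i.e. $d_X(f(s),f(t))\le C\,d(s,t)^\nu$), then $\tilde f$ is Hölder with exponent $\nu/\alpha$ with respect to the Euclidean metric on $I$: $d_X(\tilde f(a),\tilde f(b))\le \frac{2C}{M^{\nu/\alpha}}|b-a|^{\nu/\alpha}$ for all $a,b\in I$.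
   Context: The divided interval of $I$ at $W$ is $\hat I = \{w^{L}, \hat w, w^{R} : w\in W\}\sqcup (I\smallsetminus W)$, with $\pi\colon\hat I\to I$ sending $w^L,\hat w,w^R$ to $w$ and fixing $I\smallsetminus W$, totally ordered so that $\pi$ is order preserving and $w^L<\hat w<w^R$. For $a,b\in\hat I\cup\{\pm\infty\}$, $(a,b)=\{s: a<s<b\}$; basis intervals are the nonempty $(a,b)$ other than those with $a=w^L$ or $b=w^R$, and they generate the topology. The fractured interval is $\check I=\hat I\smallsetminus\{\hat w:w\in W\}$. The height of $\hat w$ is $K^{-\mathrm{gr}(w)}$, all other points have height $0$; the division metric is $d(a,b)=$ maximum height of points of $(a,b)\subset\hat I$ for $a<b$ in $\check I$. Let $W_{\ge r}=\{w\in W: K^{-\mathrm{gr}(w)}\ge r\}$ and $\mathrm{gap}(r)$ be the minimum Euclidean distance between distinct points of $W_{\ge r}$ (with $\mathrm{gap}(r)=+\infty$ if $W_{\ge r}$ has fewer than two points). *)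

(* Defs.v *)
From Stdlib Require Import Reals Lra ClassicalEpsilon.
Open Scope R_scope.

(** Open interval of R with possibly infinite endpoints (None = -oo / +oo). *)
Definition in_interval (lo hi : option R) (x : R) : Prop :=
  match lo with Some l => l < x | None => True end /\
  match hi with Some h => x < h | None => True end.

Definition countable_set (W : R -> Prop) : Prop :=
  exists e : nat -> R, forall w, W w -> exists n, e n = w.

Record is_metric {X : Type} (dX : X -> X -> R) : Prop := {
  metric_nonneg : forall x y, 0 <= dX x y;
  metric_eq0 : forall x y, dX x y = 0 <-> x = y;
  metric_sym : forall x y, dX x y = dX y x;
  metric_triangle : forall x y z, dX x z <= dX x y + dX y z }.

(** Points of the divided interval: a real [x] plus a tag.
    For w in W : (w,TL) = w^L, (w,TM) = \hat w, (w,TR) = w^R.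
    For x in I \ W : the point x is represented by (x,TM). *)
Inductive tag := TL | TM | TR.
Definition tag_rank (t : tag) : nat := match t with TL => 0 | TM => 1 | TR => 2 end.

Definition hpt := (R * tag)%type.

Definition in_divided (lo hi : option R) (W : R -> Prop) (p : hpt) : Prop :=
  in_interval lo hi (fst p) /\ (~ W (fst p) -> snd p = TM).

Definition in_fractured (lo hi : option R) (W : R -> Prop) (p : hpt) : Prop :=
  in_divided lo hi W p /\ ~ (W (fst p) /\ snd p = TM).

Definition hlt (p q : hpt) : Prop :=
  fst p < fst q \/ (fst p = fst q /\ (tag_rank (snd p) < tag_rank (snd q))%nat).

Definition height (W : R -> Prop) (gr : R -> nat) (K : R) (p : hpt) : R :=
  match excluded_middle_informative (W (fst p) /\ snd p = TM) with
  | left _ => / K ^ (gr (fst p))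
  | right _ => 0
  end.

Definition is_max (S : R -> Prop) (r : R) : Prop :=
  S r /\ forall y, S y -> y <= r.

Definition heights_between (lo hi : option R) (W : R -> Prop) (gr : R -> nat) (K : R)
  (a b : hpt) (y : R) : Prop :=
  exists p, in_divided lo hi W p /\ hlt a p /\ hlt p b /\ y = height W gr K p.

Definition division_metric (lo hi : option R) (W : R -> Prop) (gr : R -> nat) (K : R)
  (a b : hpt) : R :=
  let mx (u v : hpt) := epsilon (inhabits 0) (is_max (heights_between lo hi W gr K u v)) in
  match excluded_middle_informative (hlt a b) with
  | left _ => mx a b
  | right _ =>
      match excluded_middle_informative (hlt b a) with
      | left _ => mx b a
      | right _ => 0
      end
  end.

(** Real power x^y for x >= 0 with the convention 0^y = 0 (y > 0). *)
Definition rpow (x y : R) : R := if Req_EM_T x 0 then 0 else Rpower x y.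

(** gap(r) >= g : every two distinct points of W_{>= r} are at Euclidean
    distance >= g (gap(r) is the minimum of these distances, +oo if there are
    fewer than two such points). *)
Definition gap_ge (W : R -> Prop) (gr : R -> nat) (K r g : R) : Prop :=
  forall w1 w2, W w1 -> W w2 -> w1 <> w2 ->
    / K ^ (gr w1) >= r -> / K ^ (gr w2) >= r -> Rabs (w1 - w2) >= g.

(* Main.v *)
Require Import Defs.
From Stdlib Require Import Reals Lra ClassicalEpsilon Classical Arith Wf_nat Lia.
Open Scope R_scope.

Lemma min_gr (P : R -> Prop) (gr : R -> nat) :
  (exists w, P w) -> exists w0, P w0 /\ forall w, P w -> (gr w0 <= gr w)%nat.
Proof.
  intros [w Hw].
  assert (H : forall n, (exists w, P w /\ gr w = n) ->
     exists w0, P w0 /\ forall w, P w -> (gr w0 <= gr w)%nat).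
  { intro n; induction n as [n IH] using lt_wf_ind. intros [w1 [Hw1 E]].
    destruct (classic (exists w, P w /\ (gr w < n)%nat)) as [[w2 [Hw2 L]]|N].
    - apply (IH (gr w2) L). eauto.
    - exists w1; split; auto. intros w3 Hw3. destruct (le_lt_dec (gr w1) (gr w3)); auto.
      exfalso; apply N; exists w3; split; auto; lia. }
  apply (H (gr w)); eauto.
Qed.

Lemma in_conv lo hi u v x : in_interval lo hi u -> in_interval lo hi v -> u < x < v ->
  in_interval lo hi x.
Proof. destruct lo, hi; unfold in_interval; intros; lra. Qed.

Lemma invpow_le (K : R) (m n : nat) : 1 < K -> (m <= n)%nat -> / K ^ n <= / K ^ m.
Proof.
  intros HK Hmn. apply Rinv_le_contravar. apply pow_lt; lra.
  apply Rle_pow; lra || auto.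
Qed.

Lemma invpow_pos (K : R) (n : nat) : 1 < K -> 0 < / K ^ n.
Proof. intros; apply Rinv_0_lt_compat, pow_lt; lra. Qed.

Lemma between (lo hi : option R) (W : R -> Prop) (s t p : hpt) :
  in_divided lo hi W s -> in_divided lo hi W t ->
  (W (fst s) -> snd s = TR) -> (W (fst t) -> snd t = TL) ->
  in_divided lo hi W p -> hlt s p -> hlt p t -> fst s < fst p < fst t.
Proof.
  intros [_ Ds] [_ Dt] Hs Ht [_ Dp] H1 H2. split.
  - destruct H1 as [H1|[E L]]; auto. exfalso.
    destruct (classic (W (fst s))) as [Ws|Ws].
    + rewrite (Hs Ws) in L; simpl in L; destruct (snd p); simpl in L; lia.
    + rewrite (Ds Ws) in L. rewrite E in Ws. rewrite (Dp Ws) in L. simpl in L; lia.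
  - destruct H2 as [H2|[E L]]; auto. exfalso.
    destruct (classic (W (fst t))) as [Wt|Wt].
    + rewrite (Ht Wt) in L; simpl in L; lia.
    + rewrite (Dt Wt) in L. rewrite <- E in Wt. rewrite (Dp Wt) in L. simpl in L; lia.
Qed.

Lemma seg (lo hi : option R) (W : R -> Prop) (gr : R -> nat) (K B : R) (s t : hpt) :
  1 < K ->
  (forall a b, in_interval lo hi a -> in_interval lo hi b -> a < b ->
     exists w, W w /\ a < w < b) ->
  in_divided lo hi W s -> in_divided lo hi W t ->
  (W (fst s) -> snd s = TR) -> (W (fst t) -> snd t = TL) ->
  fst s < fst t ->
  (forall w, W w -> fst s < w < fst t -> / K ^ gr w <= B) ->
  0 < division_metric lo hi W gr K s t <= B.
Proof.
  intros HK Hdense Ds Dt Hs Ht Lst HB.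
  assert (Hst : hlt s t) by (left; auto).
  assert (HB0 : forall p, in_divided lo hi W p -> hlt s p -> hlt p t ->
             height W gr K p <= B /\ (exists w, W w /\ fst s < w < fst t)).
  { intros p Dp H1 H2. pose proof (between lo hi W s t p Ds Dt Hs Ht Dp H1 H2) as Bt.
    destruct (Hdense (fst s) (fst t) (proj1 Ds) (proj1 Dt) Lst) as [w [Ww Iw]].
    split; [|eauto].
    unfold height. destruct (excluded_middle_informative _) as [[Wp _]|_].
    - apply HB; auto.
    - pose proof (HB w Ww Iw). pose proof (invpow_pos K (gr w) HK). lra. }
  destruct (Hdense (fst s) (fst t) (proj1 Ds) (proj1 Dt) Lst) as [w1 [Ww1 Iw1]].
  destruct (min_gr (fun w => W w /\ fst s < w < fst t) gr) as [w0 [[Ww0 Iw0] Hmin]]; eauto.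
  set (m := / K ^ gr w0).
  assert (Hmax : is_max (heights_between lo hi W gr K s t) m).
  { split.
    - exists (w0, TM). split; [split|split;[|split]].
      + apply (in_conv lo hi (fst s) (fst t)); auto. apply (proj1 Ds). apply (proj1 Dt).
      + auto.
      + left; simpl; lra.
      + left; simpl; lra.
      + unfold height; simpl. destruct (excluded_middle_informative _) as [_|N]; auto.
        exfalso; apply N; auto.
    - intros y [p [Dp [H1 H2 ]]]. destruct H2 as [H2 ->].
      pose proof (between lo hi W s t p Ds Dt Hs Ht Dp H1 H2) as Bt.
      unfold height. destruct (excluded_middle_informative _) as [[Wp _]|_].
      + apply invpow_le; auto.
      + unfold m; left; apply invpow_pos; auto. }
  assert (Hm : forall y, is_max (heights_between lo hi W gr K s t) y -> y = m).
  { intros y [Y1 Y2]. apply Rle_antisym; [apply (proj2 Hmax)|apply Y2]; auto. apply (proj1 Hmax). }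
  unfold division_metric; cbv zeta.
  destruct (excluded_middle_informative (hlt s t)) as [_|N]; [|contradiction].
  assert (E : is_max (heights_between lo hi W gr K s t)
     (epsilon (inhabits 0) (is_max (heights_between lo hi W gr K s t))))
    by exact (epsilon_spec (inhabits 0) _ (ex_intro _ m Hmax)).
  pose proof E as E'. destruct E' as [[p [Dp [H1 [H2 Ey]]]] _].
  split.
  - rewrite (Hm _ E). unfold m; apply invpow_pos; auto.
  - rewrite Ey. apply (HB0 p Dp H1 H2).
Qed.

Lemma Rpower_pos x y : 0 < Rpower x y.
Proof. unfold Rpower; apply exp_pos. Qed.

Lemma Rpower_div x y z : 0 < x -> 0 < y -> Rpower (x / y) z = Rpower x z / Rpower y z.
Proof.
  intros. unfold Rdiv. rewrite <- Rpower_mult_distr; auto.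
  2: apply Rinv_0_lt_compat; auto.
  f_equal. unfold Rpower. rewrite ln_Rinv; auto. rewrite <- exp_Ropp. f_equal; ring.
Qed.

Definition topt (W : R -> Prop) (u : R) : hpt :=
  (u, if excluded_middle_informative (W u) then TR else TM).
Definition bott (W : R -> Prop) (u : R) : hpt :=
  (u, if excluded_middle_informative (W u) then TL else TM).

Lemma topt_frac lo hi W u : in_interval lo hi u -> in_fractured lo hi W (topt W u).
Proof.
  intro Hu; unfold topt; destruct (excluded_middle_informative (W u)) as [Wu|Wu];
  unfold in_fractured, in_divided; simpl; (split; [split; [exact Hu| tauto] | intros [Wu2 E]; first [discriminate | tauto]]).
Qed.
Lemma bott_frac lo hi W u : in_interval lo hi u -> in_fractured lo hi W (bott W u).
Proof.
  intro Hu; unfold bott; destruct (excluded_middle_informative (W u)) as [Wu|Wu];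
  unfold in_fractured, in_divided; simpl; (split; [split; [exact Hu| tauto] | intros [Wu2 E]; first [discriminate | tauto]]).
Qed.

Lemma main_lt
  (lo hi : option R) (W : R -> Prop) (gr : R -> nat) (K M alpha : R)
  (X : Type) (dX : X -> X -> R) (f : hpt -> X) (ft : R -> X) (nu C : R) :
  (forall a b, in_interval lo hi a -> in_interval lo hi b -> a < b ->
     exists w, W w /\ a < w < b) ->
  1 < K ->
  0 < M -> 0 < alpha ->
  (forall r, 0 < r -> gap_ge W gr K r (M * Rpower r alpha)) ->
  is_metric dX ->
  (forall p, in_fractured lo hi W p -> f p = ft (fst p)) ->
  0 < nu ->
  (forall s t, in_fractured lo hi W s -> in_fractured lo hi W t ->
     dX (f s) (f t) <= C * rpow (division_metric lo hi W gr K s t) nu) ->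
  forall a b, in_interval lo hi a -> in_interval lo hi b -> a < b ->
    dX (ft a) (ft b) <= 2 * C * Rpower ((b - a) / M) (nu / alpha).
Proof.
  intros Hdense HK HM Ha Hgap Hmet Hf Hnu Hhol a b Ia Ib Lab.
  set (r := Rpower ((b - a) / M) (/ alpha)).
  assert (Hr : 0 < r) by apply Rpower_pos.
  assert (Hra : M * Rpower r alpha = b - a).
  { unfold r. rewrite Rpower_mult, Rinv_l by lra. rewrite Rpower_1.
    field; lra. apply Rdiv_lt_0_compat; lra. }
  destruct (min_gr (fun w => W w /\ a < w < b) gr) as [w0 [[Ww0 Iw0] Hmin]].
  { destruct (Hdense a b Ia Ib Lab) as [w Hw]; eauto. }
  assert (Iw0' : in_interval lo hi w0) by (apply (in_conv lo hi a b); auto).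
  assert (Hsmall : forall w, W w -> a < w < b -> w <> w0 -> / K ^ gr w <= r).
  { intros w Ww Iw Nw. destruct (Rle_lt_dec (/ K ^ gr w) r) as [L|L]; auto. exfalso.
    assert (L0 : / K ^ gr w <= / K ^ gr w0) by (apply invpow_le; auto).
    pose proof (Hgap r Hr w w0 Ww Ww0 Nw ltac:(lra) ltac:(lra)) as G.
    rewrite Hra in G. revert G. apply Rlt_not_ge. apply Rabs_def1; lra. }
  assert (D1 : 0 < division_metric lo hi W gr K (topt W a) (w0, TL) <= r).
  { apply seg; auto.
    - apply topt_frac; auto.
    - split; auto. simpl; intros; contradiction.
    - unfold topt; simpl; intro Wa. destruct (excluded_middle_informative (W a)); tauto.
    - simpl; lra.
    - simpl; intros w Ww Iw. apply Hsmall; auto; lra. }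
  assert (D2 : 0 < division_metric lo hi W gr K (w0, TR) (bott W b) <= r).
  { apply seg; auto.
    - split; auto. simpl; intros; contradiction.
    - apply bott_frac; auto.
    - unfold bott; simpl; intro Wb. destruct (excluded_middle_informative (W b)); tauto.
    - simpl; lra.
    - simpl; intros w Ww Iw. apply Hsmall; auto; lra. }
  assert (FL : in_fractured lo hi W (w0, TL)).
  { unfold in_fractured, in_divided; simpl; split; [split; [exact Iw0'|tauto]|intros [_ E]; discriminate]. }
  assert (FR : in_fractured lo hi W (w0, TR)).
  { unfold in_fractured, in_divided; simpl; split; [split; [exact Iw0'|tauto]|intros [_ E]; discriminate]. }
  pose proof (Hhol _ _ (topt_frac lo hi W a Ia) FL) as H1.
  pose proof (Hhol _ _ FR (bott_frac lo hi W b Ib)) as H2.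
  rewrite (Hf _ (topt_frac lo hi W a Ia)), (Hf _ FL) in H1.
  rewrite (Hf _ FR), (Hf _ (bott_frac lo hi W b Ib)) in H2. simpl in H1, H2.
  unfold rpow in H1, H2.
  destruct (Req_EM_T _ 0) as [E|_] in H1; [lra|].
  destruct (Req_EM_T _ 0) as [E|_] in H2; [lra|].
  assert (P1 := Rpower_pos (division_metric lo hi W gr K (topt W a) (w0, TL)) nu).
  assert (HC : 0 <= C).
  { destruct (Rle_lt_dec 0 C) as [|L]; auto. pose proof (metric_nonneg _ Hmet (ft a) (ft w0)).
    assert (C * Rpower (division_metric lo hi W gr K (topt W a) (w0, TL)) nu < 0).
    { apply Rmult_neg_pos; auto. } lra. }
  assert (E1 : Rpower (division_metric lo hi W gr K (topt W a) (w0, TL)) nu <= Rpower r nu)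
    by (apply Rle_Rpower_l; lra).
  assert (E2 : Rpower (division_metric lo hi W gr K (w0, TR) (bott W b)) nu <= Rpower r nu)
    by (apply Rle_Rpower_l; lra).
  assert (Er : Rpower r nu = Rpower ((b - a) / M) (nu / alpha)).
  { unfold r; rewrite Rpower_mult. f_equal. unfold Rdiv; ring. }
  pose proof (metric_triangle _ Hmet (ft a) (ft w0) (ft b)).
  pose proof (Rmult_le_compat_l C _ _ HC E1).
  pose proof (Rmult_le_compat_l C _ _ HC E2).
  rewrite Er in *. lra.
Qed.

Theorem theorem3p10
  (lo hi : option R) (W : R -> Prop) (gr : R -> nat) (K M alpha : R)
  (X : Type) (dX : X -> X -> R) (f : hpt -> X) (ft : R -> X) (nu C : R) :
  (* W is a countable dense subset of the open interval I *)
  (forall w, W w -> in_interval lo hi w) ->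
  countable_set W ->
  (forall a b, in_interval lo hi a -> in_interval lo hi b -> a < b ->
     exists w, W w /\ a < w < b) ->
  (* the grading has finite fibers *)
  (forall n : nat, exists l : list R, forall w, W w -> gr w = n -> List.In w l) ->
  1 < K ->
  0 < M -> 0 < alpha ->
  (forall r, 0 < r -> gap_ge W gr K r (M * Rpower r alpha)) ->
  is_metric dX ->
  (forall p, in_fractured lo hi W p -> f p = ft (fst p)) ->
  0 < nu ->
  (forall s t, in_fractured lo hi W s -> in_fractured lo hi W t ->
     dX (f s) (f t) <= C * rpow (division_metric lo hi W gr K s t) nu) ->
  forall a b, in_interval lo hi a -> in_interval lo hi b ->
    dX (ft a) (ft b) <= 2 * C / Rpower M (nu / alpha) * rpow (Rabs (b - a)) (nu / alpha).
Proof.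
  intros _ _ Hdense _ HK HM Ha Hgap Hmet Hf Hnu Hhol a b Ia Ib.
  assert (PM := Rpower_pos M (nu / alpha)).
  destruct (Rtotal_order a b) as [L|[E|L]].
  - pose proof (main_lt lo hi W gr K M alpha X dX f ft nu C Hdense HK HM Ha Hgap Hmet Hf Hnu
      Hhol a b Ia Ib L) as H.
    rewrite Rpower_div in H by lra. unfold rpow.
    rewrite Rabs_right by lra. destruct (Req_EM_T _ 0); [lra|].
    replace (2 * C / Rpower M (nu / alpha) * Rpower (b - a) (nu / alpha))
      with (2 * C * (Rpower (b - a) (nu / alpha) / Rpower M (nu / alpha))) by (field; lra).
    exact H.
  - subst b. replace (dX (ft a) (ft a)) with 0 by (symmetry; apply (metric_eq0 _ Hmet); auto).
    unfold rpow. replace (a - a) with 0 by ring. rewrite Rabs_R0.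
    destruct (Req_EM_T 0 0); [lra|congruence].
  - pose proof (main_lt lo hi W gr K M alpha X dX f ft nu C Hdense HK HM Ha Hgap Hmet Hf Hnu
      Hhol b a Ib Ia L) as H.
    rewrite Rpower_div in H by lra. unfold rpow. rewrite (metric_sym _ Hmet).
    rewrite Rabs_left by lra. destruct (Req_EM_T _ 0); [lra|].
    replace (- (b - a)) with (a - b) by ring.
    replace (2 * C / Rpower M (nu / alpha) * Rpower (a - b) (nu / alpha))
      with (2 * C * (Rpower (a - b) (nu / alpha) / Rpower M (nu / alpha))) by (field; lra).
    exact H.
Qed.
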